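(* Let $a,b\in\mathbb{M}_2$ with $0\le a,b\le 1$ and $a,b\notin\{0,1\}$, such that $a$ is absolutely compatible with $b$ and $ab=ba$. Then: (a) If $a$ is strict, then there exist $\alpha,\beta\in(0,1)$ and a minimal (rank one) projection $p\in\mathbb{M}_2$ such that $b=p$ and $a=\alpha p+\beta(1-p)$. (b) If $a$ is not strict, then one of the following holds: (b.1) if $e(a)=0$, there exist $\alpha,\beta\in[0,1]$ with $\alpha+\beta>0$ and a minimal projection $p\in\mathbb{M}_2$ such that $a=p$ and $b=\alpha p+\beta(1-p)$; (b.2) if $s(a)\neq0$ and $e(a)\ne0$, there exist $\alpha,\beta\in[0,1]$ and a minimal projection $p\in\mathbb{M}_2$ such that either $a=p+\alpha(1-p)$ and $b=\beta p+(1-p)$ with $\alpha\ne0$, or $a=p+\alpha(1-p)$ and $b=\beta p$ with $\alpha,\beta\ne0$; (b.3) if $n(a)\ne0$ and $e(a)\neq0$, there exist $\alpha,\beta\in[0,1]$ and a minimal projection $p\in\mathbb{M}_2$ such that either $a=\alpha p$ and $b=p+\beta(1-p)$ with $\alpha\ne0$, or $a=\alpha p$ and $b=\beta(1-p)$ with $\alpha,\beta\ne0$.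
   Context: $\mathbb{M}_2$ is the algebra of $2\times2$ complex matrices. For $x$ in it, $|x|=(x^*x)^{1/2}$. Elements $0\le a,b\le 1$ are absolutely compatible if $|a-b|+|1-a-b|=1$. For positive $x$, $r(x)$ is the range projection. For $0\le a\le1$: $s(a)=1-r(1-a)$ (support projection), $e(a)=a-s(a)$, $n(a)=1-r(a)$; a non-zero $0\le a\le 1$ is strict if $s(a)=0=n(a)$. *)

(* Defs.v *)
From HB Require Import structures.
From mathcomp Require Import all_boot all_order all_algebra.
From mathcomp Require Import complex.
From mathcomp Require Import reals.
From Stdlib Require Import ClassicalEpsilon.
Set Implicit Arguments. Unset Strict Implicit. Unset Printing Implicit Defensive.
Import Order.TTheory GRing.Theory Num.Theory.
Local Open Scope ring_scope.

Section M2.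
Variable R : realType.
Local Notation C := (R[i]).
Local Notation M2 := ('M[C]_2).

Definition adj (x : M2) : M2 := map_mx Num.conj x^T.

Definition mpos (x : M2) : Prop :=
  adj x = x /\ forall v : 'cV[C]_2, 0 <= ((map_mx Num.conj v^T) *m x *m v) 0 0.

Definition mle (x y : M2) : Prop := mpos (y - x).

Definition is_proj (p : M2) : Prop := p *m p = p /\ adj p = p.

Definition minproj (p : M2) : Prop := is_proj p /\ \rank p = 1%N.

Definition mabs (x : M2) : M2 :=
  epsilon (inhabits 0) (fun y : M2 => mpos y /\ y *m y = adj x *m x).

(* range projection: the projection p whose range (column space) equals
   that of x, i.e. p x = x and p = x y for some y *)
Definition is_range_proj (x p : M2) : Prop :=
  is_proj p /\ p *m x = x /\ exists y : M2, x *m y = p.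

Definition rproj (x : M2) : M2 := epsilon (inhabits 0) (is_range_proj x).

Definition supp (a : M2) : M2 := 1 - rproj (1 - a).
Definition epart (a : M2) : M2 := a - supp a.
Definition npart (a : M2) : M2 := 1 - rproj a.

Definition strict (a : M2) : Prop := a <> 0 /\ supp a = 0 /\ npart a = 0.

Definition abs_compatible (a b : M2) : Prop :=
  mabs (a - b) + mabs (1 - a - b) = 1.

End M2.

(* Main.v *)
Require Import Defs.
From HB Require Import structures.
From mathcomp Require Import all_boot all_order all_algebra.
From mathcomp Require Import complex.
From mathcomp Require Import reals.
From mathcomp Require Import ring.
From Stdlib Require Import ClassicalEpsilon.
Import Order.TTheory GRing.Theory Num.Theory.
Set Implicit Arguments. Unset Strict Implicit. Unset Printing Implicit Defensive.
Local Open Scope ring_scope.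

Section H.
Variable R : realType.
Local Notation C := (R[i]).
Local Notation M2 := ('M[C]_2).

Lemma ord2P (i : 'I_2) : i = ord0 \/ i = lift ord0 ord0.
Proof. case: i => [[|[|//]] Hi]; [left|right]; exact: val_inj. Qed.

Definition i0 : 'I_2 := ord0.
Definition i1 : 'I_2 := lift ord0 ord0.
Lemma mx2P (A B : M2) : A i0 i0 = B i0 i0 -> A i0 i1 = B i0 i1 ->
  A i1 i0 = B i1 i0 -> A i1 i1 = B i1 i1 -> A = B.
Proof.
move=> h00 h01 h10 h11; apply/matrixP => i j.
by case: (ord2P i) => ->; case: (ord2P j) => ->.
Qed.
Ltac mx2 := apply: mx2P; rewrite /i0 /i1 !(mxE, big_ord_recl, big_ord0) /=;
  try rewrite -/i1; try rewrite -/i0.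

Lemma pch (m n : M2) :
  m *m n + n *m m - \tr m *: n - \tr n *: m + (\tr m * \tr n - \tr (m *m n)) *: 1 = 0.
Proof. rewrite /mxtrace; mx2; ring. Qed.

Lemma adjM (x y : M2) : adj (x *m y) = adj y *m adj x.
Proof. rewrite /adj; mx2; rewrite ?rmorphD ?rmorphM /=; ring. Qed.
Lemma adjD (x y : M2) : adj (x + y) = adj x + adj y.
Proof. rewrite /adj; mx2; rewrite ?rmorphD /=; ring. Qed.
Lemma adjN (x : M2) : adj (- x) = - adj x.
Proof. rewrite /adj; mx2; rewrite ?rmorphN /=; ring. Qed.
Lemma adjB (x y : M2) : adj (x - y) = adj x - adj y.
Proof. by rewrite adjD adjN. Qed.
Lemma adjZ (c : C) (x : M2) : adj (c *: x) = c^* *: adj x.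
Proof. rewrite /adj; mx2; rewrite ?rmorphM /=; ring. Qed.
Lemma adj1 : adj (1 : M2) = 1.
Proof. rewrite /adj; mx2; rewrite ?rmorph1 ?rmorph0 //. Qed.
Lemma adj0 : adj (0 : M2) = 0.
Proof. rewrite /adj; mx2; rewrite ?rmorph0 //. Qed.

Definition E (p : M2) (c d : C) : M2 := c *: p + d *: (1 - p).

Section Alg.
Variable p : M2.
Hypothesis pp : p *m p = p.

Lemma p1p : p *m (1 - p) = 0.
Proof. by rewrite mulmxBr mulmx1 pp subrr. Qed.
Lemma pp1 : (1 - p) *m p = 0.
Proof. by rewrite mulmxBl mul1mx pp subrr. Qed.
Lemma qq : (1 - p) *m (1 - p) = 1 - p.
Proof. by rewrite mulmxBl mul1mx p1p subr0. Qed.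

Lemma EM c d c' d' : E p c d *m E p c' d' = E p (c * c') (d * d').
Proof.
rewrite /E mulmxDl !mulmxDr -!scalemxAl -!scalemxAr pp p1p pp1 qq.
by rewrite !scaler0 addr0 add0r !scalerA.
Qed.
Lemma ED c d c' d' : E p c d + E p c' d' = E p (c + c') (d + d').
Proof. by rewrite /E !scalerDl addrACA. Qed.
Lemma EN c d : - E p c d = E p (- c) (- d).
Proof. by rewrite /E opprD !scaleNr. Qed.
Lemma EB c d c' d' : E p c d - E p c' d' = E p (c - c') (d - d').
Proof. by rewrite EN ED. Qed.
Lemma EZ k c d : k *: E p c d = E p (k * c) (k * d).
Proof. by rewrite /E scalerDr !scalerA. Qed.
Lemma E1 : E p 1 1 = 1.
Proof. by rewrite /E !scale1r addrC subrK. Qed.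
Lemma E0 : E p 0 0 = 0.
Proof. by rewrite /E !scale0r addr0. Qed.
Lemma Eswap c d : E p c d = E (1 - p) d c.
Proof. have h : 1 - (1 - p) = p by rewrite opprB addrC subrK.
by rewrite /E h addrC. Qed.
Lemma Eadj c d : adj p = p -> adj (E p c d) = E p c^* d^*.
Proof. by move=> hp; rewrite /E adjD !adjZ adjB adj1 hp. Qed.

Lemma EMp c d : E p c d *m p = c *: p.
Proof. by rewrite /E mulmxDl -!scalemxAl pp pp1 scaler0 addr0. Qed.

Lemma Einj c d c' d' : p != 0 -> p != 1 -> E p c d = E p c' d' -> c = c' /\ d = d'.
Proof.
move=> p0 p1 h; split.
  have := EMp c d; rewrite h EMp => /eqP; rewrite -subr_eq0 -scalerBl scaler_eq0.
  by rewrite (negbTE p0) orbF subr_eq0 => /eqP.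
have := congr1 (fun x => x *m (1 - p)) h => /=.
rewrite /E !mulmxDl -!scalemxAl p1p qq !scaler0 !add0r => /eqP.
rewrite -subr_eq0 -scalerBl scaler_eq0 subr_eq0 => /orP [/eqP //|].
by rewrite subr_eq0 eq_sym (negbTE p1).
Qed.
End Alg.


Local Notation cj := (map_mx Num.conj).

Lemma adjcv (x : M2) (u : 'cV[C]_2) : cj (x *m u)^T = cj u^T *m adj x.
Proof. by rewrite /adj trmx_mul map_mxM. Qed.

Lemma vvE (u : 'cV[C]_2) :
  (cj u^T *m u) 0 0 = (u i0 0)^* * u i0 0 + (u i1 0)^* * u i1 0.
Proof. by rewrite !(mxE, big_ord_recl, big_ord0) addr0. Qed.

Lemma vv_ge0 (u : 'cV[C]_2) : 0 <= (cj u^T *m u) 0 0.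
Proof. by rewrite vvE addr_ge0 // mulrC mul_conjC_ge0. Qed.

Lemma projv_ge0 (q : M2) (u : 'cV_2) : is_proj q -> 0 <= (cj u^T *m q *m u) 0 0.
Proof.
case=> qq qa.
have -> : cj u^T *m q *m u = cj (q *m u)^T *m (q *m u).
  by rewrite adjcv qa -!mulmxA [q *m (q *m u)]mulmxA qq.
exact: vv_ge0.
Qed.

Lemma mposE (p : M2) c d : is_proj p -> 0 <= c -> 0 <= d -> mpos (E p c d).
Proof.
move=> [pp pa] c0 d0; split.
  by rewrite Eadj // !conj_Creal // ger0_real.
move=> v; rewrite /E mulmxDr mulmxDl -!scalemxAr -!scalemxAl.
have q1 : is_proj (1 - p) by split; [exact: qq | rewrite adjB adj1 pa].
have := addr_ge0 (mulr_ge0 c0 (@projv_ge0 p v (conj pp pa))) (mulr_ge0 d0 (@projv_ge0 (1 - p) v q1)).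
by rewrite !mxE.
Qed.

Lemma sum4_gt0 (p : M2) : p != 0 ->
  0 < ((cj (col i0 p)^T *m col i0 p) 0 0 + (cj (col i1 p)^T *m col i1 p) 0 0).
Proof.
move=> p0; rewrite lt0r addr_ge0 ?vv_ge0 // andbT.
apply: contra p0; rewrite !vvE !mxE.
have g : forall x : C, 0 <= x^* * x by move=> x; rewrite mulrC mul_conjC_ge0.
rewrite paddr_eq0 ?addr_ge0 // !paddr_eq0 // => /andP[/andP[h1 h2] /andP[h3 h4]].
move: h1 h2 h3 h4; rewrite ![_^* * _]mulrC !mul_conjC_eq0 => /eqP h1 /eqP h2 /eqP h3 /eqP h4.
by apply/eqP; apply: mx2P; rewrite mxE.
Qed.

Lemma mpos_ge0 (p : M2) c d : is_proj p -> p != 0 -> mpos (E p c d) -> 0 <= c.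
Proof.
move=> [pp pa] p0 [_ hv].
have key : forall j, (cj (col j p)^T *m E p c d *m col j p) 0 0
                     = c * (cj (col j p)^T *m col j p) 0 0.
  move=> j; have pv : p *m col j p = col j p by rewrite colE mulmxA pp.
  have qv : (1 - p) *m col j p = 0 by rewrite mulmxBl mul1mx pv subrr.
  rewrite -mulmxA /E mulmxDl -!scalemxAl pv qv scaler0 addr0 -scalemxAr mxE //.
have := addr_ge0 (hv (col i0 p)) (hv (col i1 p)).
by rewrite !key -mulrDr pmulr_lge0 // sum4_gt0.
Qed.


Lemma rank1 (p : M2) : p *m p = p -> p != 0 -> p != 1 -> \rank p = 1%N.
Proof.
move=> pp p0 p1.
have r2 := rank_leq_row p.
have r0 : \rank p != 0%N by rewrite mxrank_eq0.
have rn2 : \rank p != 2%N.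
  apply/negP => /eqP h2.
  have u : p \in unitmx by rewrite -row_free_unit /row_free h2.
  have := congr1 (mulmx (invmx p)) pp; rewrite mulmxA mulVmx // mul1mx => h.
  by move/eqP: p1; apply.
by move: r2 r0 rn2; case: (\rank p) => [|[|[|]]].
Qed.

Lemma tr_ne (p : M2) : \tr p = 1 -> p != 0 /\ p != 1.
Proof.
move=> h; split; apply/eqP => e; move: h; rewrite e ?mxtrace0 ?mxtrace1.
  by move/eqP; rewrite eq_sym oner_eq0.
by move/eqP; rewrite -subr_eq0 -[X in _ - X]/(1%:R) -natrB // oner_eq0.
Qed.

Lemma rp_uniq (x q1 q2 : M2) : is_range_proj x q1 -> is_range_proj x q2 -> q1 = q2.
Proof.
move=> [[_ a1] [h1 [y1 e1]]] [[_ a2] [h2 [y2 e2]]].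
have m12 : q1 *m q2 = q2 by rewrite -e2 mulmxA h1.
have m21 : q2 *m q1 = q1 by rewrite -e1 mulmxA h2.
by rewrite -a2 -m12 adjM a1 a2 m21.
Qed.

Lemma rproj_eq (x q : M2) : is_range_proj x q -> rproj x = q.
Proof.
move=> h; apply: (@rp_uniq x _ q _ h); rewrite /rproj.
by apply: epsilon_spec; exists q.
Qed.

Lemma rprojE (p : M2) c d : is_proj p ->
  rproj (E p c d) = E p (c != 0)%:R (d != 0)%:R.
Proof.
move=> [pp pa]; apply: rproj_eq; split; [split|split].
- by rewrite EM // -!natrM !mulnb !andbb.
- by rewrite Eadj // !rmorph_nat.
- by rewrite EM //; congr E; case: eqP => [->|]; rewrite ?mulr0 ?mul1r.
- exists (E p c^-1 d^-1); rewrite EM //.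
  by congr E; case: eqP => [->|/eqP h]; rewrite ?mul0r ?mulfV.
Qed.


Lemma delta_proj : is_proj (delta_mx i0 i0 : M2) /\ \tr (delta_mx i0 i0 : M2) = 1.
Proof.
split; [split|].
- by rewrite mul_delta_mx.
- rewrite /adj; mx2; by rewrite ?rmorph0 ?rmorph1.
- by rewrite /mxtrace !(mxE, big_ord_recl, big_ord0) /= !addr0.
Qed.

Lemma diag (a : M2) : adj a = a ->
  exists p c1 c2, [/\ is_proj p, \tr p = 1 & a = E p c1 c2].
Proof.
move=> ha.
have e : forall i j, (a j i)^* = a i j.
  by move=> i j; have := congr1 (fun m : M2 => m i j) ha; rewrite !mxE.
set r := a i0 i0; set s := a i1 i1; set z := a i0 i1.
have rr : r^* = r by rewrite e.
have sr : s^* = s by rewrite e.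
have wz : a i1 i0 = z^* by rewrite e.
have [z0|z0] := eqVneq z 0.
  exists (delta_mx i0 i0), r, s; have [pr pt] := delta_proj; split => //.
  rewrite /E; mx2; rewrite -/r -/s -/z ?wz ?z0 ?rmorph0; ring.
pose D := sqrtC ((r - s) ^+ 2 + 4 * (z * z^*)).
have rs : (r - s)^* = r - s by rewrite rmorphB /= rr sr.
have Dpos : 0 < (r - s) ^+ 2 + 4 * (z * z^*).
  apply: ltr_wpDl; first by rewrite expr2 -{2}rs mul_conjC_ge0.
  by rewrite mulr_gt0 ?mul_conjC_gt0 // ltr0n.
have D2 : D ^+ 2 = (r - s) ^+ 2 + 4 * (z * z^*) by rewrite sqrtCK.
have D0 : D != 0 by rewrite sqrtC_eq0 gt_eqF.
have Dr : D^* = D by rewrite conj_Creal // ger0_real // sqrtC_ge0 ltW.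
clearbody D.
pose c2 := (r + s - D) / 2; pose c1 := (r + s + D) / 2.
have c2r : c2^* = c2.
  by rewrite /c2 rmorphM rmorphB rmorphD /= rr sr Dr fmorphV rmorph_nat.
pose p := D^-1 *: (a - c2 *: 1).
exists p, c1, c2; split; [split| |].
- have zs : a i1 i0 = (D ^+ 2 - (r - s) ^+ 2) / (4 * z).
    by rewrite D2 wz; field; rewrite z0.
  rewrite /p; mx2; rewrite -/r -/s -/z ?zs /c2 !mulr1 !mulr0 !subr0 ?addr0;
    field; rewrite ?D0 ?z0 ?pnatr_eq0 //.
- by rewrite /p adjZ adjB adjZ adj1 ha fmorphV /= Dr c2r.
- rewrite /p /mxtrace; rewrite !(mxE, big_ord_recl, big_ord0) /= -/i0 -/i1 -/r -/s /c2.
  by rewrite !mulr1 addr0; field; rewrite ?D0 ?pnatr_eq0.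
- have h1 : c1 - c2 = D by rewrite /c1 /c2; field.
  transitivity ((c1 - c2) *: p + c2 *: 1).
    by rewrite h1 /p scalerA mulfV // scale1r subrK.
  by rewrite /E scalerBl scalerBr addrA addrAC.
Qed.
Lemma corner (q x : M2) : q *m q = q -> \tr q = 1 -> q *m x *m q = \tr (q *m x *m q) *: q.
Proof.
move=> qq tq; set n := q *m x *m q.
have qn : q *m n = n by rewrite /n !mulmxA qq.
have nq : n *m q = n by rewrite /n -mulmxA qq.
have := pch q n; rewrite qn nq tq mul1r subrr scale0r addr0 scale1r addrK.
by move/eqP; rewrite subr_eq0 => /eqP.
Qed.

Lemma E_scal (p : M2) c : E p c c = c *: 1.
Proof. by rewrite /E -scalerDr addrC subrK. Qed.

Lemma E_lin (p : M2) c1 c2 : E p c1 c2 = (c1 - c2) *: p + c2 *: 1.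
Proof. by rewrite /E scalerBl scalerBr addrA addrAC. Qed.

Lemma commp (p a b : M2) c1 c2 : c1 != c2 -> a = E p c1 c2 ->
  a *m b = b *m a -> p *m b = b *m p.
Proof.
move=> ne ha ab.
have hp : p = (c1 - c2)^-1 *: (a - c2 *: 1).
  by rewrite ha E_lin addrK scalerA mulVf ?scale1r // subr_eq0.
rewrite hp -scalemxAl -scalemxAr mulmxBl mulmxBr ab -!scalemxAl -!scalemxAr.
by rewrite mul1mx mulmx1.
Qed.

Lemma split_b (p b : M2) : p *m p = p -> p *m b = b *m p ->
  b = p *m b *m p + (1 - p) *m b *m (1 - p).
Proof.
move=> pp pb.
have e1 : p *m b *m p = p *m b by rewrite -mulmxA -pb mulmxA pp.
rewrite !mulmxBl !mul1mx !mulmxBr !mulmx1 e1 -pb.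
by rewrite subrr subr0 addrC subrK.
Qed.

Lemma joint (a b : M2) : adj a = a -> adj b = b -> a *m b = b *m a ->
  exists p x1 x2 y1 y2,
    [/\ is_proj p, p != 0, p != 1, a = E p x1 x2 & b = E p y1 y2].
Proof.
move=> ha hb ab.
have [p [c1 [c2 [pr pt ea]]]] := diag ha.
have [c12|c12] := eqVneq c1 c2.
  have [q [d1 [d2 [qr qt eb]]]] := diag hb.
  have [q0 q1] := tr_ne qt.
  exists q, c1, c1, d1, d2; split => //.
  by rewrite ea c12 !E_scal.
have [p0 p1] := tr_ne pt.
have pb := commp c12 ea ab.
case: pr => pp pa.
exists p, c1, c2, (\tr (p *m b *m p)), (\tr ((1 - p) *m b *m (1 - p))); split => //.
have tq : \tr (1 - p) = 1.
  by rewrite linearB /= pt mxtrace1 -[X in X - _]/(1 + 1) addrK.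
by rewrite /E -(corner _ pp pt) -(corner _ (qq pp) tq); exact: split_b.
Qed.
Lemma two0 (t : C) : t *+ 2 = 0 -> t = 0.
Proof. by move/eqP; rewrite mulrn_eq0 /= => /eqP. Qed.

Lemma cond_of (u x y : C) : u * u = (x - y) * (x - y) ->
  (1 - u) * (1 - u) = (1 - x - y) * (1 - x - y) ->
  [\/ y = 0, x = 1, x = 0 | y = 1].
Proof.
move=> /eqP h1 /eqP h2; move: h1 h2; rewrite -!expr2 !eqf_sqr.
case/orP => /eqP h1; case/orP => /eqP h2.
- constructor 1; apply: two0.
  have -> : y *+ 2 = (1 - u) - (1 - x - y) by rewrite h1; ring.
  by rewrite h2 subrr.
- constructor 2; apply/eqP; rewrite -subr_eq0; apply/eqP; apply: two0.
  have -> : (x - 1) *+ 2 = - (1 - u) + - (1 - x - y) by rewrite h1; ring.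
  by rewrite h2 opprK subrr.
- constructor 3; apply: two0.
  have -> : x *+ 2 = (1 - u) - (1 - x - y) by rewrite h1; ring.
  by rewrite h2 subrr.
- constructor 4; apply/eqP; rewrite -subr_eq0; apply/eqP; apply: two0.
  have -> : (y - 1) *+ 2 = - (1 - u) + - (1 - x - y) by rewrite h1; ring.
  by rewrite h2 opprK subrr.
Qed.

Lemma mabsE (p : M2) c1 c2 : is_proj p ->
  mabs (E p c1 c2) *m mabs (E p c1 c2) = E p (c1^* * c1) (c2^* * c2).
Proof.
move=> [pp pa].
have : mpos (mabs (E p c1 c2)) /\
       mabs (E p c1 c2) *m mabs (E p c1 c2) = adj (E p c1 c2) *m E p c1 c2.
  apply: (@epsilon_spec _ (inhabits 0) (fun y : M2 => mpos y /\ y *m y = adj (E p c1 c2) *m E p c1 c2)).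
  exists (E p `|c1| `|c2|); split.
    by apply: mposE.
  rewrite Eadj // !EM //; congr E; by rewrite -expr2 normCK mulrC.
by case=> _ ->; rewrite Eadj // EM.
Qed.

Lemma compat (p : M2) x1 x2 y1 y2 : is_proj p -> p != 0 -> p != 1 ->
  x1^* = x1 -> x2^* = x2 -> y1^* = y1 -> y2^* = y2 ->
  abs_compatible (E p x1 x2) (E p y1 y2) ->
  [\/ y1 = 0, x1 = 1, x1 = 0 | y1 = 1] /\ [\/ y2 = 0, x2 = 1, x2 = 0 | y2 = 1].
Proof.
move=> pr p0 p1 rx1 rx2 ry1 ry2; rewrite /abs_compatible.
have pp := pr.1.
rewrite EB // -[in mabs (1 - _ - _)](E1 p) !EB //.
set Y1 := mabs _; set Y2 := mabs _ => hc.
have D1 := mabsE (x1 - y1) (x2 - y2) pr; rewrite -/Y1 in D1.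
have D2 := mabsE (1 - x1 - y1) (1 - x2 - y2) pr; rewrite -/Y2 in D2.
have hY2 : Y2 = 1 - Y1 by rewrite -hc addrC addKr.
have key : Y1 + Y1 = 1 + Y1 *m Y1 - Y2 *m Y2.
  rewrite hY2 mulmxBl mul1mx mulmxBr mulmx1.
  mx2; ring.
have hY1 : Y1 = E p (2^-1 * (1 + (x1 - y1)^* * (x1 - y1) - (1 - x1 - y1)^* * (1 - x1 - y1)))
                   (2^-1 * (1 + (x2 - y2)^* * (x2 - y2) - (1 - x2 - y2)^* * (1 - x2 - y2))).
  rewrite -EZ // -EB // -ED // E1 // -D1 -D2 -key.
  have h2 : (2^-1 + 2^-1 : C) = 1 by field.
  by rewrite scalerDr -scalerDl h2 scale1r.
move: D1 D2; rewrite hY2 hY1 -[in (1 : M2) - _](E1 p) EB // !EM // => D1 D2.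
have [e1 e2] := Einj pp p0 p1 D1.
have [f1 f2] := Einj pp p0 p1 D2.
have cj1 : forall x y : C, x^* = x -> y^* = y -> (x - y)^* = x - y.
  by move=> x y hx hy; rewrite rmorphB /= hx hy.
have cj2 : forall x y : C, x^* = x -> y^* = y -> (1 - x - y)^* = 1 - x - y.
  by move=> x y hx hy; rewrite !rmorphB /= rmorph1 hx hy.
rewrite ?(cj1 _ _ rx1 ry1) ?(cj1 _ _ rx2 ry2) ?(cj2 _ _ rx1 ry1) ?(cj2 _ _ rx2 ry2) in e1 e2 f1 f2.
by split; [exact: cond_of e1 f1 | exact: cond_of e2 f2].
Qed.
Local Open Scope complex_scope.

Lemma toR_le (x : C) : 0 <= x -> x <= 1 -> exists2 al : R, x = al%:C & 0 <= al <= 1.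
Proof.
move=> h0 h1; exists (complex.Re x); first by rewrite RRe_real // ger0_real.
have e := RRe_real (ger0_real h0).
move: h0 h1; rewrite -{1 2}e ler0c => -> /=.
by rewrite -[1 : C]/(1%:C) lecR.
Qed.

Lemma toR_lt (x : C) : 0 < x -> x < 1 -> exists2 al : R, x = al%:C & 0 < al < 1.
Proof.
move=> h0 h1; exists (complex.Re x); first by rewrite RRe_real // ger0_real // ltW.
have e := RRe_real (ger0_real (ltW h0)).
move: h0 h1; rewrite -{1 2}e -[0 : C]/(0%:C) ltcR => -> /=.
by rewrite -[1 : C]/(1%:C) ltcR.
Qed.

Lemma PA (p a b : M2) x1 x2 : minproj p -> 0 < x1 < 1 -> 0 < x2 < 1 ->
  b = E p 1 0 -> a = E p x1 x2 ->
  exists (alpha beta : R) (p : M2),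
    [/\ 0 < alpha < 1, 0 < beta < 1, minproj p,
        b = p & a = alpha%:C *: p + beta%:C *: (1 - p)].
Proof.
move=> mp /andP[h1 h2] /andP[h3 h4] eb ea.
have [al e1 hal] := toR_lt h1 h2; have [be e2 hbe] := toR_lt h3 h4.
exists al, be, p; split; [exact: hal|exact: hbe|exact: mp| |].
  by rewrite eb /E scale1r scale0r addr0.
by rewrite ea e1 e2 /E.
Qed.

Lemma PB1 (p a b : M2) y1 y2 : minproj p -> 0 <= y1 <= 1 -> 0 <= y2 <= 1 ->
  ~ (y1 = 0 /\ y2 = 0) -> a = E p 1 0 -> b = E p y1 y2 ->
  exists (alpha beta : R) (p : M2),
    [/\ 0 <= alpha <= 1, 0 <= beta <= 1, 0 < alpha + beta, minproj p &
        a = p /\ b = alpha%:C *: p + beta%:C *: (1 - p)].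
Proof.
move=> mp /andP[h1 h2] /andP[h3 h4] nz ea eb.
have [al e1 hal] := toR_le h1 h2; have [be e2 hbe] := toR_le h3 h4.
exists al, be, p; split; [exact: hal|exact: hbe| |exact: mp|split].
- rewrite lt0r addr_ge0 ?andbT; last 2 first.
    by case/andP: hal. by case/andP: hbe.
  rewrite paddr_eq0; [|by case/andP: hal|by case/andP: hbe].
  by apply/negP => /andP[/eqP a0 /eqP b0]; apply: nz; rewrite e1 e2 a0 b0.
- by rewrite ea /E scale1r scale0r addr0.
- by rewrite eb e1 e2 /E.
Qed.

Lemma PB2 (p a b : M2) x y : minproj p -> 0 < x < 1 -> 0 <= y <= 1 ->
  a = E p 1 x -> (b = E p y 1 \/ (b = E p y 0 /\ y != 0)) ->
  exists (alpha beta : R) (p : M2),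
    [/\ 0 <= alpha <= 1, 0 <= beta <= 1, minproj p &
        ([/\ a = p + alpha%:C *: (1 - p), b = beta%:C *: p + (1 - p)
           & alpha <> 0] \/
         [/\ a = p + alpha%:C *: (1 - p), b = beta%:C *: p,
             alpha <> 0 & beta <> 0])].
Proof.
move=> mp /andP[h1 h2] /andP[h3 h4] ea hb.
have [al e1 /andP[hal1 hal2]] := toR_lt h1 h2; have [be e2 hbe] := toR_le h3 h4.
exists al, be, p; split; [by rewrite !ltW|exact: hbe|exact: mp|].
have an : al <> 0 by move=> a0; move: hal1; rewrite a0 ltxx.
case: hb => [eb|[eb yn]]; [left|right]; split; try exact: an.
- by rewrite ea /E scale1r e1.
- by rewrite eb /E scale1r e2.
- by rewrite ea /E scale1r e1.
- by rewrite eb /E scale0r addr0 e2.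
- by move=> b0; move: yn; rewrite e2 b0 eqxx.
Qed.

Lemma PB3 (p a b : M2) x y : minproj p -> 0 < x < 1 -> 0 <= y <= 1 ->
  a = E p x 0 -> (b = E p 1 y \/ (b = E p 0 y /\ y != 0)) ->
  exists (alpha beta : R) (p : M2),
    [/\ 0 <= alpha <= 1, 0 <= beta <= 1, minproj p &
        ([/\ a = alpha%:C *: p, b = p + beta%:C *: (1 - p)
           & alpha <> 0] \/
         [/\ a = alpha%:C *: p, b = beta%:C *: (1 - p),
             alpha <> 0 & beta <> 0])].
Proof.
move=> mp /andP[h1 h2] /andP[h3 h4] ea hb.
have [al e1 /andP[hal1 hal2]] := toR_lt h1 h2; have [be e2 hbe] := toR_le h3 h4.
exists al, be, p; split; [by rewrite !ltW|exact: hbe|exact: mp|].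
have an : al <> 0 by move=> a0; move: hal1; rewrite a0 ltxx.
case: hb => [eb|[eb yn]]; [left|right]; split; try exact: an.
- by rewrite ea /E scale0r addr0 e1.
- by rewrite eb /E scale1r e2.
- by rewrite ea /E scale0r addr0 e1.
- by rewrite eb /E scale0r add0r e2.
- by move=> b0; move: yn; rewrite e2 b0 eqxx.
Qed.
End H.

Section H2.
Variable R : realType.
Local Notation C := (R[i]).
Local Notation M2 := ('M[C]_2).

Lemma Ezero (p : M2) c d : p *m p = p -> p != 0 -> p != 1 -> E p c d = 0 -> c = 0 /\ d = 0.
Proof. by move=> pp p0 p1 h; apply: (Einj pp p0 p1); rewrite h E0. Qed.

Lemma ind_false (b : bool) : (b%:R : C) = 0 -> b = false.
Proof. by case: b => //= /eqP; rewrite oner_eq0. Qed.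

Lemma ltb (x : C) : 0 <= x -> x <= 1 -> x != 0 -> x != 1 -> 0 < x < 1.
Proof. by move=> h0 h1 n0 n1; rewrite lt0r n0 h0 /= lt_neqAle n1 h1. Qed.

Lemma ind1 (x : C) : 1 - ((1 - x) != 0)%:R = (x == 1)%:R :> C.
Proof. by rewrite subr_eq0 eq_sym; case: (x == 1); rewrite /= ?subr0 ?subrr. Qed.

Lemma ind0 (x : C) : 1 - (x != 0)%:R = (x == 0)%:R :> C.
Proof. by case: (x == 0); rewrite /= ?subr0 ?subrr. Qed.

Lemma ex0 (x : C) : x = 0 \/ x = 1 -> x - (x == 1)%:R = 0.
Proof. by case=> ->; rewrite ?eqxx ?subrr // eq_sym oner_eq0 subrr. Qed.

Lemma one_sub (p : M2) : 1 - (1 - p) = p.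
Proof. by rewrite opprB addrC subrK. Qed.

End H2.
Unset Implicit Arguments.
Local Open Scope ring_scope.
Local Open Scope complex_scope.

Theorem proposition3p1 (R : realType) (a b : 'M[R[i]]_2) :
  mle 0 a -> mle a 1 -> mle 0 b -> mle b 1 ->
  a <> 0 -> a <> 1 -> b <> 0 -> b <> 1 ->
  abs_compatible a b -> a *m b = b *m a ->
  (strict a ->
     exists (alpha beta : R) (p : 'M[R[i]]_2),
       [/\ 0 < alpha < 1, 0 < beta < 1, minproj p,
           b = p & a = alpha%:C *: p + beta%:C *: (1 - p)]) /\
  (~ strict a ->
     (epart a = 0 ->
        exists (alpha beta : R) (p : 'M[R[i]]_2),
          [/\ 0 <= alpha <= 1, 0 <= beta <= 1, 0 < alpha + beta, minproj p &
              a = p /\ b = alpha%:C *: p + beta%:C *: (1 - p)]) /\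
     (supp a <> 0 -> epart a <> 0 ->
        exists (alpha beta : R) (p : 'M[R[i]]_2),
          [/\ 0 <= alpha <= 1, 0 <= beta <= 1, minproj p &
              ([/\ a = p + alpha%:C *: (1 - p), b = beta%:C *: p + (1 - p)
                 & alpha <> 0] \/
               [/\ a = p + alpha%:C *: (1 - p), b = beta%:C *: p,
                   alpha <> 0 & beta <> 0])]) /\
     (npart a <> 0 -> epart a <> 0 ->
        exists (alpha beta : R) (p : 'M[R[i]]_2),
          [/\ 0 <= alpha <= 1, 0 <= beta <= 1, minproj p &
              ([/\ a = alpha%:C *: p, b = p + beta%:C *: (1 - p)
                 & alpha <> 0] \/
               [/\ a = alpha%:C *: p, b = beta%:C *: (1 - p),
                   alpha <> 0 & beta <> 0])])).
Proof.
move=> ha0 ha1 hb0 hb1 a0 a1 b0 b1 hc ab.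
rewrite /mle subr0 in ha0; rewrite /mle subr0 in hb0.
have [p [x1 [x2 [y1 [y2 [pr p0 p1 ea eb]]]]]] := joint ha0.1 hb0.1 ab.
have pp := pr.1.
have mp : minproj p by split; [exact: pr | exact: rank1].
have qr : is_proj (1 - p) by split; [exact: qq | rewrite adjB adj1 pr.2].
have q0 : 1 - p != 0 by rewrite subr_eq0 eq_sym.
have q1 : 1 - p != 1.
  by apply/eqP => h; move/eqP: p0; apply; rewrite -(one_sub p) h subrr.
have mq : minproj (1 - p) by split; [exact: qr | exact: rank1 (qq pp) q0 q1].
have ea' : 1 - a = E p (1 - x1) (1 - x2) by rewrite ea -[in LHS](E1 p) EB.
have eb' : 1 - b = E p (1 - y1) (1 - y2) by rewrite eb -[in LHS](E1 p) EB.
rewrite /mle ea' in ha1; rewrite /mle eb' in hb1.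
rewrite ea in ha0; rewrite eb in hb0.
have x1g : 0 <= x1 by apply: (mpos_ge0 pr p0 ha0).
have y1g : 0 <= y1 by apply: (mpos_ge0 pr p0 hb0).
have x2g : 0 <= x2 by apply: (@mpos_ge0 _ (1 - p) x2 x1 qr q0); rewrite -Eswap.
have y2g : 0 <= y2 by apply: (@mpos_ge0 _ (1 - p) y2 y1 qr q0); rewrite -Eswap.
have x1l : x1 <= 1 by rewrite -subr_ge0; apply: (mpos_ge0 pr p0 ha1).
have y1l : y1 <= 1 by rewrite -subr_ge0; apply: (mpos_ge0 pr p0 hb1).
have x2l : x2 <= 1.
  by rewrite -subr_ge0; apply: (@mpos_ge0 _ (1 - p) (1 - x2) (1 - x1) qr q0); rewrite -Eswap.
have y2l : y2 <= 1.
  by rewrite -subr_ge0; apply: (@mpos_ge0 _ (1 - p) (1 - y2) (1 - y1) qr q0); rewrite -Eswap.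
have rx1 := conj_Creal (ger0_real x1g); have rx2 := conj_Creal (ger0_real x2g).
have ry1 := conj_Creal (ger0_real y1g); have ry2 := conj_Creal (ger0_real y2g).
have [c1 c2] : [\/ y1 = 0, x1 = 1, x1 = 0 | y1 = 1] /\ [\/ y2 = 0, x2 = 1, x2 = 0 | y2 = 1].
  by apply: (compat pr p0 p1 rx1 rx2 ry1 ry2); rewrite -ea -eb.
have hs : supp a = E p (x1 == 1)%:R (x2 == 1)%:R.
  by rewrite /supp ea' rprojE // -[in LHS](E1 p) EB // !ind1.
have hn : npart a = E p (x1 == 0)%:R (x2 == 0)%:R.
  by rewrite /npart ea rprojE // -[in LHS](E1 p) EB // !ind0.
have he : epart a = E p (x1 - (x1 == 1)%:R) (x2 - (x2 == 1)%:R).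
  by rewrite /epart hs ea EB.
have an : ~ (x1 = 0 /\ x2 = 0) by case=> e1 e2; apply: a0; rewrite ea e1 e2 E0.
have a1n : ~ (x1 = 1 /\ x2 = 1) by case=> e1 e2; apply: a1; rewrite ea e1 e2 E1.
have bn : ~ (y1 = 0 /\ y2 = 0) by case=> e1 e2; apply: b0; rewrite eb e1 e2 E0.
have b1n : ~ (y1 = 1 /\ y2 = 1) by case=> e1 e2; apply: b1; rewrite eb e1 e2 E1.
have ea2 : a = E (1 - p) x2 x1 by rewrite ea Eswap.
have eb2 : b = E (1 - p) y2 y1 by rewrite eb Eswap.
have yb1 : 0 <= y1 <= 1 by rewrite y1g y1l.
have yb2 : 0 <= y2 <= 1 by rewrite y2g y2l.
have cy1 : x1 != 0 -> x1 != 1 -> y1 = 0 \/ y1 = 1.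
  move=> n0 n1; case: c1 => [->|e|e|->]; auto.
    by move: n1; rewrite e eqxx.
  by move: n0; rewrite e eqxx.
have cy2 : x2 != 0 -> x2 != 1 -> y2 = 0 \/ y2 = 1.
  move=> n0 n1; case: c2 => [->|e|e|->]; auto.
    by move: n1; rewrite e eqxx.
  by move: n0; rewrite e eqxx.
split.
  case=> _ [sa na]; rewrite hs in sa; rewrite hn in na.
  have [s1 s2] := Ezero pp p0 p1 sa; have [n1 n2] := Ezero pp p0 p1 na.
  move: (ind_false s1) (ind_false s2) (ind_false n1) (ind_false n2).
  move=> /negbT s1' /negbT s2' /negbT n1' /negbT n2'.
  have lx1 := ltb x1g x1l n1' s1'; have lx2 := ltb x2g x2l n2' s2'.
  case: (cy1 n1' s1') => e1; case: (cy2 n2' s2') => e2.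
  - by case: bn.
  - by apply: (PA mq lx2 lx1); [rewrite eb2 e1 e2 | exact: ea2].
  - by apply: (PA mp lx1 lx2); [rewrite eb e1 e2 | exact: ea].
  - by case: b1n.
move=> _; split; [|split].
- move=> e0; rewrite he in e0; have [e1 e2] := Ezero pp p0 p1 e0.
  have d1 : x1 = 1 \/ x1 = 0.
    by case: (eqVneq x1 1) => h; [left | right; move: e1; rewrite (negbTE h) subr0].
  have d2 : x2 = 1 \/ x2 = 0.
    by case: (eqVneq x2 1) => h; [left | right; move: e2; rewrite (negbTE h) subr0].
  case: d1 => h1; case: d2 => h2.
  + by case: a1n.
  + by apply: (PB1 mp yb1 yb2 bn); [rewrite ea h1 h2 | exact: eb].
  + apply: (PB1 mq yb2 yb1); [by case=> ? ?; apply: bn | by rewrite ea2 h1 h2 | exact: eb2].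
  + by case: an.
- move=> sn en; rewrite hs in sn; rewrite he in en.
  have : (x1 == 1) || (x2 == 1).
    case: eqP => [//|/eqP h1]; case: eqP => [//|/eqP h2].
    by case: sn; rewrite (negbTE h1) (negbTE h2) E0.
  case/orP => /eqP h.
  + have n21 : x2 != 1 by apply/eqP => h2; apply: a1n.
    have n20 : x2 != 0.
      by apply/eqP => h2; apply: en; rewrite (ex0 (or_intror h)) (ex0 (or_introl h2)) E0.
    have lx2 := ltb x2g x2l n20 n21.
    apply: (PB2 mp lx2 yb1); first by rewrite ea h.
    case: (cy2 n20 n21) => e2; [right; split | left]; rewrite ?eb ?e2 //.
    by apply/eqP => y0; apply: bn.
  + have n11 : x1 != 1 by apply/eqP => h1; apply: a1n.
    have n10 : x1 != 0.
      by apply/eqP => h1; apply: en; rewrite (ex0 (or_introl h1)) (ex0 (or_intror h)) E0.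
    have lx1 := ltb x1g x1l n10 n11.
    apply: (PB2 mq lx1 yb2); first by rewrite ea2 h.
    case: (cy1 n10 n11) => e1; [right; split | left]; rewrite ?eb2 ?e1 //.
    by apply/eqP => y0; apply: bn.
- move=> nn en; rewrite hn in nn; rewrite he in en.
  have : (x1 == 0) || (x2 == 0).
    case: eqP => [//|/eqP h1]; case: eqP => [//|/eqP h2].
    by case: nn; rewrite (negbTE h1) (negbTE h2) E0.
  case/orP => /eqP h.
  + have n20 : x2 != 0 by apply/eqP => h2; apply: an.
    have n21 : x2 != 1.
      by apply/eqP => h2; apply: en; rewrite (ex0 (or_introl h)) (ex0 (or_intror h2)) E0.
    have lx2 := ltb x2g x2l n20 n21.
    apply: (PB3 mq lx2 yb1); first by rewrite ea2 h.
    case: (cy2 n20 n21) => e2; [right; split | left]; rewrite ?eb2 ?e2 //.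
    by apply/eqP => y0; apply: bn.
  + have n10 : x1 != 0 by apply/eqP => h1; apply: an.
    have n11 : x1 != 1.
      by apply/eqP => h1; apply: en; rewrite (ex0 (or_intror h1)) (ex0 (or_introl h)) E0.
    have lx1 := ltb x1g x1l n10 n11.
    apply: (PB3 mp lx1 yb2); first by rewrite ea h.
    case: (cy1 n10 n11) => e1; [right; split | left]; rewrite ?eb ?e1 //.
    by apply/eqP => y0; apply: bn.
Qed.
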